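(* Each of the following holds, where each larger space is regarded as a metric space with the supremum-norm metric: (i) $c$ is strongly lower porous in $\widehat{c}$; (ii) $c_0$ is strongly lower porous in $\widehat{c_0}$; (iii) $\widehat{c}$ is strongly lower porous in $S$; (iv) $\widehat{c_0}$ is strongly lower porous in $S_0$; (v) $S$ is strongly lower porous in $\ell^\infty$.
   Context: $\ell^\infty$ is the space of bounded real sequences with the sup norm; $c$ and $c_0$ are the subspaces of convergent sequences and sequences convergent to $0$. A Banach limit is a linear functional $L\colon\ell^\infty\to\mathbb R$ such that for every $(x_n)\in\ell^\infty$: (1) if $x_n\ge0$ for all $n$ then $L((x_n))\ge0$; (2) $L((x_2,x_3,\dots))=L((x_1,x_2,\dots))$; (3) $L((1,1,\dots))=1$. $\widehat{c}$ is the set of $x\in\ell^\infty$ for which there is $s\in\mathbb R$ with $L(x)=s$ for every Banach limit $L$; $\widehat{c_0}$ is the set of $x\in\ell^\infty$ with $L(x)=0$ for every Banach limit $L$. $S=\{x\in\ell^\infty\colon\lim_n\frac{x_1+\dots+x_n}{n}\text{ exists}\}$, $S_0=\{x\in\ell^\infty\colon\lim_n\frac{x_1+\dots+x_n}{n}=0\}$. In a metric space $(Y,d)$, with $B(x,r)=\{y\colon d(x,y)<r\}$ and, for $E\subset Y$, $\gamma(x,R,E)=\sup\{r>0\colon\exists z\in Y,\ B(z,r)\subset B(x,R)\setminus E\}$, the lower porosity of $E$ at $x$ is $2\liminf_{r\to0^+}\gamma(x,r,E)/r$; $E$ is strongly lower porous in $Y$ if its lower porosity equals $1$ at every point of $E$.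 *)

(* Defs.v *)
From HB Require Import structures.
From mathcomp Require Import all_boot all_order all_algebra.
From mathcomp Require Import all_classical all_reals all_analysis.
Set Implicit Arguments. Unset Strict Implicit. Unset Printing Implicit Defensive.
Import Order.TTheory GRing.Theory Num.Theory.
Import numFieldNormedType.Exports.
Local Open Scope classical_set_scope.
Local Open Scope ring_scope.

Section Defs.
Variable R : realType.

Definition linf : set (nat -> R) := [set x | exists M : R, forall n, `|x n| <= M].

(* sup-norm distance, valued in extended reals (finite on l^infty) *)
Definition supdist (x y : nat -> R) : \bar R :=
  ereal_sup [set (`|x n - y n|)%:E | n in [set: nat]].

Definition cseq : set (nat -> R) := [set x | linf x /\ cvgn x].
Definition c0seq : set (nat -> R) := [set x | linf x /\ x @ \oo --> (0 : R)].

(* Banach limits: linear functionals on l^infty (values outside l^infty are irrelevant) *)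
Definition BanachLimit (L : (nat -> R) -> R) : Prop :=
  [/\ (forall x y, linf x -> linf y -> L (fun n => x n + y n) = L x + L y),
      (forall (a : R) x, linf x -> L (fun n => a * x n) = a * L x),
      (forall x, linf x -> (forall n, 0 <= x n) -> 0 <= L x),
      (forall x, linf x -> L (fun n => x n.+1) = L x) &
      L (fun _ => 1) = 1].

Definition chat : set (nat -> R) :=
  [set x | linf x /\ exists s : R, forall L, BanachLimit L -> L x = s].
Definition chat0 : set (nat -> R) :=
  [set x | linf x /\ forall L, BanachLimit L -> L x = 0].

(* Cesaro means: (x_1 + ... + x_n)/n, here with 0-based indexing *)
Definition cesaro (x : nat -> R) (n : nat) : R :=
  (\sum_(i < n.+1) x i) / n.+1%:R.
Definition Sset : set (nat -> R) := [set x | linf x /\ cvgn (cesaro x)].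
Definition S0set : set (nat -> R) := [set x | linf x /\ cesaro x @ \oo --> (0 : R)].

Definition ballY (Y : set (nat -> R)) (x : nat -> R) (r : R) : set (nat -> R) :=
  [set y | Y y /\ (supdist x y < r%:E)%E].

Definition gammaP (Y E : set (nat -> R)) (x : nat -> R) (Rad : R) : \bar R :=
  ereal_sup [set r%:E | r in [set r : R | 0 < r /\
     exists z, Y z /\ ballY Y z r `<=` ballY Y x Rad `\` E]].

Definition liminf0r (f : R -> \bar R) : \bar R :=
  ereal_sup [set ereal_inf [set f r | r in [set r : R | 0 < r < d]]
            | d in [set d : R | 0 < d]].

Definition lower_porosity (Y E : set (nat -> R)) (x : nat -> R) : \bar R :=
  (2%:E * liminf0r (fun r => gammaP Y E x r * (r^-1)%:E))%E.

Definition strongly_lower_porous (Y E : set (nat -> R)) : Prop :=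
  forall x, E x -> lower_porosity Y E x = 1%E.

End Defs.

(* Main.v *)
Require Import Defs.
From mathcomp Require Import all_boot all_order all_algebra.
From mathcomp Require Import all_classical all_reals all_analysis.
From mathcomp Require Import ring lra zify.
From Stdlib Require PeanoNat.
Require Import Defs.
Set Implicit Arguments. Unset Strict Implicit. Unset Printing Implicit Defensive.
Import Order.TTheory GRing.Theory Num.Theory.
Import numFieldNormedType.Exports.
Local Open Scope classical_set_scope.
Local Open Scope ring_scope.


Section Gen.
Variable R : realType.
Implicit Types (x y z u v w : nat -> R).

Lemma supdist_le x y c : (forall n, `|x n - y n| <= c) -> (supdist x y <= c%:E)%E.
Proof. by move=> H; apply: ge_ereal_sup => _ [n _ <-]; rewrite lee_fin. Qed.

Lemma supdist_ub x y n : (`|x n - y n|%:E <= supdist x y)%E.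
Proof. by apply: ereal_sup_ubound; exists n. Qed.

Lemma supdist_fin x y : linf x -> linf y -> exists D : R,
  [/\ supdist x y = D%:E, (forall n, `|x n - y n| <= D) &
      (forall c, (forall n, `|x n - y n| <= c) -> D <= c)].
Proof.
move=> [Mx Hx] [My Hy].
have Hb : forall n, `|x n - y n| <= Mx + My.
  by move=> n; apply: (le_trans (ler_normB _ _)); apply: lerD.
have h1 := supdist_le Hb.
have h0 := supdist_ub x y 0.
have hf : supdist x y \is a fin_num.
  rewrite fin_numE; apply/andP; split; apply/eqP => E.
    by rewrite E in h0.
  by rewrite E in h1.
exists (fine (supdist x y)); split.
- by rewrite fineK.
- by move=> n; rewrite -lee_fin fineK // supdist_ub.
- by move=> c Hc; rewrite -lee_fin fineK //; apply: supdist_le.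
Qed.

Definition lin_closed (P : set (nat -> R)) :=
  forall u v (a b : R), P u -> P v -> P (fun n => a * u n + b * v n).


Lemma gamma_eq (Y E : set (nat -> R)) (w : nat -> R) :
  Y `<=` @linf R -> lin_closed Y -> lin_closed E -> E `<=` Y -> Y w ->
  (forall n, `|w n| <= 1) ->
  (forall e, E e -> forall c, c < 1 -> exists n, c < `|w n - e n|) ->
  forall x r, E x -> 0 < r -> gammaP Y E x r = (r / 2)%:E.
Proof.
move=> HYl HY HE HEY Yw w1 far x r Ex r0.
have Yx := HEY _ Ex.
apply/eqP; rewrite eq_le; apply/andP; split.
- apply: ge_ereal_sup => _ [rho [rho0 [z [Yz Hsub]]] <-]; rewrite lee_fin.
  have [D [hD hDn hDc]] := supdist_fin (HYl _ Yz) (HYl _ Yx).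
  have rhoD : rho <= D.
    have : ~ ballY Y z rho x by move=> /Hsub [_]; apply.
    rewrite /ballY /= hD lte_fin => H; rewrite leNgt; apply/negP => H2; exact: H.
  have key : forall c, 0 <= c -> c * D < rho -> (1 + c) * D < r.
    move=> c c0 cD.
    pose y := fun n => (1 + c) * z n + (- c) * x n.
    have Yy : Y y by apply: HY.
    have : ballY Y z rho y.
      split => //; apply: (le_lt_trans (supdist_le (c := c * D) _)); last by rewrite lte_fin.
      move=> n; rewrite /y.
      have -> : z n - ((1 + c) * z n + - c * x n) = - (c * (z n - x n)) by ring.
      by rewrite normrN normrM (ger0_norm c0); apply: ler_wpM2l.
    move=> /Hsub [[_ hxy] _].
    have [D2 [hD2 hD2n _]] := supdist_fin (HYl _ Yx) (HYl _ Yy).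
    rewrite hD2 lte_fin in hxy.
    apply: le_lt_trans hxy.
    have c1 : 0 < 1 + c by lra.
    rewrite mulrC -ler_pdivlMr //; apply: hDc => n.
    rewrite ler_pdivlMr // -(ger0_norm (ltW c1)) -normrM.
    have -> : (z n - x n) * (1 + c) = - (x n - y n) by rewrite /y; ring.
    by rewrite normrN.
  rewrite leNgt; apply/negP => hr.
  have D0 : 0 < D by apply: lt_le_trans rho0 rhoD.
  have Dr : D < r.
    by have := key 0 (lexx 0); rewrite mul0r addr0 mul1r; apply.
  have Dn0 : D != 0 by rewrite gt_eqF.
  have H := key ((r - D) / D); rewrite divfK // in H.
  have E1 : (1 + (r - D) / D) * D = r by field.
  rewrite E1 ltxx in H.
  suff : false by [].
  apply: H.
    by rewrite divr_ge0 // ?subr_ge0 ltW.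
  lra.
- rewrite /gammaP; set S := (X in ereal_sup X).
  have mem : forall rho, 0 < rho -> rho < r / 2 -> S rho%:E.
    move=> rho rho0 rhor; exists rho => //; split => //.
    have Yz : Y (fun n => 1 * x n + (r / 2) * w n) by apply: HY.
    exists (fun n => 1 * x n + (r / 2) * w n); split => //.
    move=> y [Yy hzy].
    have [D3 [hD3 hD3n _]] := supdist_fin (HYl _ Yz) (HYl _ Yy).
    rewrite hD3 lte_fin in hzy.
    split.
      split => //; apply: (le_lt_trans (supdist_le (c := r / 2 + D3) _)); last by rewrite lte_fin; lra.
      move=> n.
      have -> : x n - y n = - ((r / 2) * w n) + ((1 * x n + r / 2 * w n) - y n) by ring.
      apply: (le_trans (ler_normD _ _)); apply: lerD; last exact: hD3n.
      rewrite normrN normrM (@ger0_norm _ (r / 2) ltac:(lra)).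
      by rewrite -[leRHS]mulr1; apply: ler_wpM2l; [lra|].
    move=> Ey.
    have Ee : E (fun n => (2 / r) * y n + (- (2 / r)) * x n) by apply: HE.
    have r2 : 0 < 2 / r by rewrite divr_gt0.
    have [|n hn] := far _ Ee ((2 / r) * D3).
      by rewrite -ltr_pdivlMl // invf_div; lra.
    move: hn; apply/negP; rewrite -leNgt.
    have rn0 : r != 0 by rewrite gt_eqF.
    have -> : w n - (2 / r * y n + - (2 / r) * x n) = (2 / r) * ((1 * x n + r / 2 * w n) - y n).
      by field.
    by rewrite normrM (ger0_norm (ltW r2)); apply: ler_wpM2l; [lra|].
  rewrite leNgt; apply/negP => hlt.
  have h4 : ((r / 4)%:E <= ereal_sup S)%E.
    by apply: ereal_sup_ubound; apply: mem; lra.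
  have hf : ereal_sup S \is a fin_num.
    rewrite fin_numE; apply/andP; split; apply/eqP => E0.
      by rewrite E0 in h4.
    by rewrite E0 in hlt.
  have Et : ereal_sup S = (fine (ereal_sup S))%:E by rewrite fineK.
  move: hlt h4; rewrite Et !lte_fin !lee_fin; set t := fine _ => hlt h4.
  have H : S ((t + r / 2) / 2)%:E by apply: mem; lra.
  have := ereal_sup_ubound H; rewrite Et lee_fin leNgt => /negP H2.
  by apply: H2; rewrite -/t; lra.
Qed.

Lemma porous_of_gamma (Y E : set (nat -> R)) :
  (forall x r, E x -> 0 < r -> gammaP Y E x r = (r / 2)%:E) ->
  strongly_lower_porous Y E.
Proof.
move=> H x Ex; rewrite /lower_porosity /liminf0r.
have inner : forall d : R, 0 < d -> ereal_inf [set (gammaP Y E x r * (r^-1)%:E)%E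
   | r in [set r : R | 0 < r < d]] = (2^-1)%:E.
  move=> d d0; rewrite (_ : [set _ | _ in _] = [set (2^-1)%:E]) ?ereal_inf1 //.
  apply/seteqP; split => [_ [r /andP [r0 _] <-]|_ ->] /=.
    by rewrite H // -EFinM; congr EFin; field; rewrite gt_eqF.
  exists (d / 2); first by apply/andP; split; lra.
  by rewrite H ?divr_gt0 // -EFinM; congr EFin; field; rewrite gt_eqF.
rewrite (_ : [set _ | _ in _] = [set (2^-1)%:E]) ?ereal_sup1.
  by rewrite -EFinM divff.
apply/seteqP; split => [_ [d d0 <-]|_ ->] /=; first by rewrite inner.
by exists 1 => //; rewrite inner.
Qed.

Lemma porous_main (Y E : set (nat -> R)) (w : nat -> R) :
  Y `<=` @linf R -> lin_closed Y -> lin_closed E -> E `<=` Y -> Y w ->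
  (forall n, `|w n| <= 1) ->
  (forall e, E e -> forall c, c < 1 -> exists n, c < `|w n - e n|) ->
  strongly_lower_porous Y E.
Proof.
move=> h1 h2 h3 h4 h5 h6 h7; apply: porous_of_gamma => x r Ex r0.
exact: (gamma_eq h1 h2 h3 h4 h5 h6 h7).
Qed.
End Gen.


Section P2.
Variable R : realType.
Implicit Types (x y z u v w : nat -> R).

Lemma cvg_lin (T : Type) (F : set_system T) {FF : Filter F} (f g : T -> R) (a b lf lg : R) :
  f @ F --> lf -> g @ F --> lg -> (fun t => a * f t + b * g t) @ F --> a * lf + b * lg.
Proof.
move=> hf hg.
apply: (@cvgD _ _ _ _ FF (fun t => a * f t) (fun t => b * g t)).
  by apply: (@cvgM _ _ _ FF (fun=> a) f); [exact: cvg_cst|].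
by apply: (@cvgM _ _ _ FF (fun=> b) g); [exact: cvg_cst|].
Qed.

Lemma linf_lin : lin_closed (@linf R).
Proof.
move=> u v a b [Mu hu] [Mv hv]; exists (`|a| * Mu + `|b| * Mv) => n.
apply: (le_trans (ler_normD _ _)); rewrite !normrM.
by apply: lerD; apply: ler_wpM2l.
Qed.

Lemma linf_cst (c : R) : linf (fun _ : nat => c).
Proof. by exists `|c|. Qed.

Lemma linf_scale u a : linf u -> linf (fun n => a * u n).
Proof. by move=> [M hM]; exists (`|a| * M) => n; rewrite normrM ler_wpM2l. Qed.

Lemma linf_shift u N : linf u -> linf (fun n => u (n + N)%N).
Proof. by move=> [M hM]; exists M. Qed.

Lemma cesaro_lin u v (a b : R) :
  cesaro (fun n => a * u n + b * v n) = (fun n => a * cesaro u n + b * cesaro v n).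
Proof.
apply/funext => n; rewrite /cesaro big_split /= -!mulr_sumr; ring.
Qed.

Lemma BL_lin L : BanachLimit L -> forall u v a b, linf u -> linf v ->
  L (fun n => a * u n + b * v n) = a * L u + b * L v.
Proof.
case=> Hadd Hsc _ _ _ u v a b lu lv.
transitivity (L (fun n => a * u n) + L (fun n => b * v n)).
  exact: (Hadd (fun n => a * u n) (fun n => b * v n) (linf_scale a lu) (linf_scale b lv)).
by rewrite Hsc // Hsc.
Qed.

Lemma BL_bound L u c : BanachLimit L -> linf u -> (forall n, `|u n| <= c) -> `|L u| <= c.
Proof.
move=> BL lu hc; have BL' := BL; case: BL' => _ _ Hpos _ H1.
have l1 := linf_cst 1.
have h1 : 0 <= L (fun n => -1 * u n + c * 1).
  apply: Hpos; first exact: linf_lin.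
  by move=> n; rewrite mulr1 mulN1r; have := hc n; rewrite ler_norml; lra.
have h2 : 0 <= L (fun n => 1 * u n + c * 1).
  apply: Hpos; first exact: linf_lin.
  by move=> n; rewrite mulr1 mul1r; have := hc n; rewrite ler_norml; lra.
rewrite !(BL_lin BL) ?H1 // in h1 h2.
by rewrite ler_norml; lra.
Qed.

Lemma BL_shiftN L u N : BanachLimit L -> linf u -> L (fun n => u (n + N)%N) = L u.
Proof.
move=> BL lu; case: (BL) => _ _ _ Hsh _.
elim: N => [|N IH]; first by congr L; apply/funext => n; rewrite addn0.
rewrite -IH -(Hsh _ (linf_shift N lu)); congr L; apply/funext => n.
by rewrite addSnnS.
Qed.

Lemma small0 (t : R) : (forall e, 0 < e -> `|t| <= e) -> t = 0.
Proof.
move=> h; apply/eqP; rewrite -normr_le0; apply/ler_addgt0Pr => e e0.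
by rewrite add0r; apply: h.
Qed.

Lemma BL_lim L u l : BanachLimit L -> linf u -> u @ \oo --> l -> L u = l.
Proof.
move=> BL lu hu; case: (BL) => _ _ _ _ H1.
pose v := fun n => 1 * u n + (- l) * 1.
have lv : linf v by apply: linf_lin => //; exact: linf_cst.
have Lv : L v = L u - l by rewrite /v (BL_lin BL) ?H1 //; [ring|exact: linf_cst].
suff : L v = 0 by rewrite Lv => /eqP; rewrite subr_eq0 => /eqP.
apply: small0 => e e0.
move/cvgrPdist_le : hu => /(_ e e0) [N _ hN].
rewrite -(BL_shiftN N BL lv); apply: BL_bound => //; first exact: (linf_shift N lv).
move=> n; rewrite /v mul1r mulr1 -normrN opprB.
by apply: hN; rewrite /= leq_addl.
Qed.

End P2.


Section P3.
Variable R : realType.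
Implicit Types (x y z u v w : nat -> R).

Lemma chat_lin : lin_closed (@chat R).
Proof.
move=> u v a b [lu [su hu]] [lv [sv hv]]; split; first exact: linf_lin.
by exists (a * su + b * sv) => L BL; rewrite (BL_lin BL) // hu // hv.
Qed.

Lemma chat0_lin : lin_closed (@chat0 R).
Proof.
move=> u v a b [lu hu] [lv hv]; split; first exact: linf_lin.
by move=> L BL; rewrite (BL_lin BL) // hu // hv // !mulr0 addr0.
Qed.

Lemma cseq_lin : lin_closed (@cseq R).
Proof.
move=> u v a b [lu hu] [lv hv]; split; first exact: linf_lin.
by apply: cvgP; apply: cvg_lin; [exact: hu|exact: hv].
Qed.

Lemma c0seq_lin : lin_closed (@c0seq R).
Proof.
move=> u v a b [lu hu] [lv hv]; split; first exact: linf_lin.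
have := cvg_lin (F:=\oo) (a:=a) (b:=b) hu hv; rewrite !mulr0 addr0; apply; exact: _.
Qed.

Lemma Sset_lin : lin_closed (@Sset R).
Proof.
move=> u v a b [lu hu] [lv hv]; split; first exact: linf_lin.
by rewrite cesaro_lin; apply: cvgP; apply: cvg_lin; [exact: hu|exact: hv].
Qed.

Lemma S0set_lin : lin_closed (@S0set R).
Proof.
move=> u v a b [lu hu] [lv hv]; split; first exact: linf_lin.
rewrite cesaro_lin; have := cvg_lin (F:=\oo) (a:=a) (b:=b) hu hv; rewrite !mulr0 addr0; apply; exact: _.
Qed.

Lemma cseq_chat : @cseq R `<=` @chat R.
Proof.
move=> u [lu hu]; split => //; exists (limn u) => L BL.
exact: BL_lim.
Qed.

Lemma c0seq_chat0 : @c0seq R `<=` @chat0 R.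
Proof. by move=> u [lu hu]; split => // L BL; exact: BL_lim. Qed.

Lemma c0seq_cseq : @c0seq R `<=` @cseq R.
Proof. by move=> u [lu hu]; split => //; apply: cvgP hu. Qed.

Lemma chat0_chat : @chat0 R `<=` @chat R.
Proof. by move=> u [lu hu]; split => //; exists 0. Qed.

Lemma chat_linf : @chat R `<=` @linf R. Proof. by move=> u []. Qed.
Lemma chat0_linf : @chat0 R `<=` @linf R. Proof. by move=> u []. Qed.
Lemma Sset_linf : @Sset R `<=` @linf R. Proof. by move=> u []. Qed.
Lemma S0set_linf : @S0set R `<=` @linf R. Proof. by move=> u []. Qed.
Lemma S0set_Sset : @S0set R `<=` @Sset R.
Proof. by move=> u [lu hu]; split => //; apply: cvgP hu. Qed.

End P3.


Section P4.
Variable R : realType.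
Implicit Types (x y z u v w : nat -> R).

Lemma ulim_cvg (U : set_system nat) (UU : UltraFilter U) (f : nat -> R) (M : R) :
  (forall k, `|f k| <= M) -> cvg (f @ U).
Proof.
move=> hM.
have FA : (f @ U) `[-M, M]%classic.
  suff : U (f @^-1` `[-M, M]%classic) by [].
  by apply: filterE => k; rewrite /= in_itv /= -ler_norml.
have [p [_ hp]] := @segment_compact R (-M) M (f @ U) _ FA.
apply: (cvgP p) => B hB.
case: (in_ultra_setVsetC (f @^-1` B) UU) => // hC.
have [k [hk1 hk2]] := hp (~` B) B hC hB.
by exfalso; apply: hk1.
Qed.

Definition wavg (b : nat -> nat) (y : nat -> R) (k : nat) : R :=
  (\sum_(i < k.+1) y (b k + i)%N) / k.+1%:R.

Lemma wavg_lin b u v (a c : R) :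
  wavg b (fun n => a * u n + c * v n) = (fun k => a * wavg b u k + c * wavg b v k).
Proof.
apply/funext => k; rewrite /wavg big_split /= -!mulr_sumr; ring.
Qed.

Lemma wavg_bound b y M : (forall n, `|y n| <= M) -> forall k, `|wavg b y k| <= M.
Proof.
move=> hM k; rewrite /wavg normrM normfV.
rewrite ler_pdivrMr; last by rewrite normr_gt0 pnatr_eq0.
apply: (le_trans (ler_norm_sum _ _ _)).
have -> : `|k.+1%:R : R| = \sum_(i < k.+1) (1 : R).
  by rewrite sumr_const card_ord ger0_norm.
rewrite mulr_sumr; apply: ler_sum => i _; rewrite mulr1; exact: hM.
Qed.

Lemma lim_lin (U : set_system nat) {UU : ProperFilter U} (f g : nat -> R) (a c : R) :
  cvg (f @ U) -> cvg (g @ U) ->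
  lim ((fun k => a * f k + c * g k) @ U) = a * lim (f @ U) + c * lim (g @ U).
Proof. by move=> hf hg; apply: cvg_lim => //; apply: cvg_lin. Qed.

Lemma wavg_shift b y k : wavg b (fun n => y n.+1) k =
  1 * wavg b y k + 1 * ((y (b k + k.+1)%N - y (b k)) / k.+1%:R).
Proof.
rewrite /wavg !mul1r -mulrDl; congr (_ / _).
rewrite big_ord_recr /= [in RHS]big_ord_recl /= addn0.
under eq_bigr do rewrite -addnS.
under [in RHS]eq_bigr do rewrite /bump /= add1n.
by rewrite -addnS; ring.
Qed.

Lemma cvg_diff0 b y M : (forall n, `|y n| <= M) ->
  (fun k => (y (b k + k.+1)%N - y (b k)) / k.+1%:R) @ \oo --> (0 : R).
Proof.
move=> hM.
have M0 : 0 <= M by apply: le_trans (hM 0%N).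
apply/cvgrPdist_le => e e0.
have h := @cvg_harmonic R.
move/cvgrPdist_le : h => /(_ (e / (2 * M + 1))) [|N _ hN].
  by rewrite divr_gt0 //; lra.
exists N => // k /hN; rewrite /harmonic /= !sub0r !normrN => hk.
rewrite normrM normfV.
have h1 : `|y (b k + k.+1)%N - y (b k)| <= 2 * M.
  by apply: (le_trans (ler_normB _ _)); have := hM (b k + k.+1)%N; have := hM (b k); lra.
have h2 : `|k.+1%:R : R|^-1 <= e / (2 * M + 1) by move: hk; rewrite normfV.
have h3 : 0 <= `|k.+1%:R : R|^-1 by rewrite invr_ge0 normr_ge0.
apply: (le_trans (ler_pM (normr_ge0 _) h3 h1 h2)).
rewrite mulrA ler_pdivrMr; last lra.
nra.
Qed.

Lemma BL_ultra (U : set_system nat) (UU : UltraFilter U) (HU : \oo `<=` U) (b : nat -> nat) :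
  BanachLimit (fun y => lim (wavg b y @ U)).
Proof.
have cv : forall y, linf y -> cvg (wavg b y @ U).
  by move=> y [M hM]; apply: (ulim_cvg UU (M := M)); apply: wavg_bound.
split.
- move=> x y lx ly.
  have -> : (fun n => x n + y n) = (fun n => 1 * x n + 1 * y n).
    by apply/funext => n; rewrite !mul1r.
  by rewrite wavg_lin lim_lin; [ring|exact: cv|exact: cv].
- move=> a x lx.
  have -> : (fun n => a * x n) = (fun n => a * x n + 0 * x n).
    by apply/funext => n; rewrite mul0r addr0.
  by rewrite wavg_lin lim_lin; [ring|exact: cv|exact: cv].
- move=> x lx hx; apply: limr_ge; first exact: cv.
  apply: filterE => k; rewrite /wavg divr_ge0 //; apply: sumr_ge0 => i _; exact: hx.
- move=> y [M hM].
  have hd := cvg_diff0 b hM.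
  have hdU : (fun k => (y (b k + k.+1)%N - y (b k)) / k.+1%:R) @ U --> (0 : R).
    by move=> A hA; apply: HU; apply: hd.
  rewrite (_ : wavg b (fun n => y n.+1) = (fun k => 1 * wavg b y k + 1 * ((y (b k + k.+1)%N - y (b k)) / k.+1%:R))); last by apply/funext => k; rewrite wavg_shift.
  have ly : linf y by exists M.
  rewrite lim_lin; [|exact: cv|exact: cvgP hdU].
  by rewrite (cvg_lim _ hdU) //; ring.
- rewrite (_ : wavg b _ = fun=> 1); first by rewrite lim_cst.
  apply/funext => k; rewrite /wavg sumr_const card_ord -[_ *+ _]/(k.+1%:R).
  by rewrite divff // pnatr_eq0.
Qed.

Lemma ultra_ex (A : set nat) : (forall N, exists n, (N <= n)%N /\ A n) ->
  exists U : set_system nat, [/\ UltraFilter U, \oo `<=` U & U A].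
Proof.
move=> hA.
have PF : ProperFilter (within A \oo).
  apply: Build_ProperFilter_ex => P [N _ hN].
  have [n [hn An]] := hA N; exists n; exact: hN.
have [G [GU sG]] := ultraFilterLemma PF.
exists G; split => //.
  move=> P hP; apply: sG; rewrite /within; apply: filterS hP => n Pn _; exact: Pn.
by apply: sG; rewrite /within /=; near=> n; apply. Unshelve. all: end_near.
Qed.

End P4.


Section P5.
Variable R : realType.
Implicit Types (x y z u v w : nat -> R).

Lemma BL_all_cesaro x (s : R) : linf x -> (forall L, BanachLimit L -> L x = s) ->
  cesaro x @ \oo --> s.
Proof.
move=> lx hx; apply/cvgrPdist_lt => e e0.
apply: contrapT => H.
have hA : forall N, exists n, (N <= n)%N /\ ~ (`|s - cesaro x n| < e).
  move=> N; apply: contrapT => H2; apply: H; exists N => // n /= hn.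
  by apply: contrapT => h3; apply: H2; exists n; split.
have [U [UU HU UA]] := ultra_ex hA.
have BL := @BL_ultra R U UU HU (fun _ => 0%N).
have hL := hx _ BL.
have wc : wavg (fun _ => 0%N) x = cesaro x.
  apply/funext => k; rewrite /wavg /cesaro /=.
  by under eq_bigr do rewrite add0n.
have cv : cesaro x @ U --> s.
  rewrite -wc -hL; case: lx => M hM.
  exact: (ulim_cvg UU (M := M) (wavg_bound _ hM)).
move/cvgrPdist_lt: cv => /(_ e e0) hn.
have [n [h1 h2]] := filter_ex (filterI hn UA).
exact: h2.
Qed.

Lemma chat_Sset : @chat R `<=` @Sset R.
Proof.
move=> x [lx [s hs]]; split => //; exact: (cvgP _ (BL_all_cesaro lx hs)).
Qed.

Lemma chat0_S0set : @chat0 R `<=` @S0set R.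
Proof. by move=> x [lx hs]; split => //; exact: BL_all_cesaro. Qed.

Definition w1 : nat -> R := fun n => (-1) ^+ n.

Lemma w1_bound n : `|w1 n| <= 1.
Proof. by rewrite /w1 normrX normrN1 expr1n. Qed.

Lemma w1_linf : linf w1.
Proof. by exists 1; apply: w1_bound. Qed.

Lemma w1_chat0 : chat0 w1.
Proof.
split; first exact: w1_linf.
move=> L BL; have BL' := BL; case: BL' => _ Hsc _ Hsh _.
have h1 := Hsh _ w1_linf.
have h2 : L (fun n => w1 n.+1) = L (fun n => -1 * w1 n).
  by congr L; apply/funext => n; rewrite /w1 exprS.
rewrite h2 Hsc in h1; last exact: w1_linf.
lra.
Qed.

Lemma w1_far e : cseq e -> forall c : R, c < 1 -> exists n, c < `|w1 n - e n|.
Proof.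
move=> [le he] c c1.
set l := limn e.
have : e @ \oo --> l by [].
move/cvgrPdist_lt => /(_ (1 - c)) [|N _ hN]; first lra.
have key : forall n, (N <= n)%N -> 1 <= `|w1 n - l| -> c < `|w1 n - e n|.
  move=> n hn h1; have := hN n hn.
  have : `|w1 n - l| <= `|w1 n - e n| + `|l - e n|.
    have -> : w1 n - l = (w1 n - e n) - (l - e n) by ring.
    exact: ler_normB.
  lra.
have [l0|l0] := leP 0 l.
  exists (N.*2.+1); apply: key.
    by rewrite -addnn -addnS leq_addr.
  rewrite /w1 exprS -mul2n exprM sqrrN expr1n expr1n mulr1 ler_normr; apply/orP; right; lra.
exists (N.*2); apply: key.
  by rewrite -addnn leq_addr.
rewrite /w1 -mul2n exprM sqrrN expr1n expr1n ler_normr; apply/orP; left; lra.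
Qed.

Lemma w1_far0 e : c0seq e -> forall c : R, c < 1 -> exists n, c < `|w1 n - e n|.
Proof. by move=> h; apply: w1_far; apply: c0seq_cseq. Qed.

Lemma part_i : strongly_lower_porous (@chat R) (@cseq R).
Proof.
apply: (porous_main (w := w1)).
- exact: chat_linf.
- exact: chat_lin.
- exact: cseq_lin.
- exact: cseq_chat.
- exact: chat0_chat w1_chat0.
- exact: w1_bound.
- exact: w1_far.
Qed.

Lemma part_ii : strongly_lower_porous (@chat0 R) (@c0seq R).
Proof.
apply: (porous_main (w := w1)).
- exact: chat0_linf.
- exact: chat0_lin.
- exact: c0seq_lin.
- exact: c0seq_chat0.
- exact: w1_chat0.
- exact: w1_bound.
- exact: w1_far0.
Qed.

End P5.


Lemma isq_unique s n : (s * s <= n < s.+1 * s.+1)%N -> Nat.sqrt n = s.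
Proof. move=> /andP [h1 h2]; apply: PeanoNat.Nat.sqrt_unique; split; lia. Qed.
Lemma isq_spec n : (Nat.sqrt n * Nat.sqrt n <= n < (Nat.sqrt n).+1 * (Nat.sqrt n).+1)%N.
Proof. have [|h1 h2] := PeanoNat.Nat.sqrt_spec n; first lia. apply/andP; split; lia. Qed.

Section P6.
Variable R : realType.
Implicit Types (x y z u v w : nat -> R).

Definition w3 : nat -> R := fun n => (-1) ^+ (Nat.sqrt n).

Lemma w3_bound n : `|w3 n| <= 1.
Proof. by rewrite /w3 normrX normrN1 expr1n. Qed.

Lemma w3_linf : linf w3.
Proof. by exists 1; apply: w3_bound. Qed.

Lemma w3_block s : \sum_(s * s <= i < s.+1 * s.+1) w3 i = (-1) ^+ s * ((2 * s + 1)%N)%:R.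
Proof.
rewrite (eq_big_nat _ _ (F2 := fun=> (-1) ^+ s)); last first.
  by move=> i hi; rewrite /w3 (isq_unique hi).
rewrite sumr_const_nat (_ : (s.+1 * s.+1 - s * s = 2 * s + 1)%N) ?mulr_natr //; lia.
Qed.

Lemma w3_sum_sq s : \sum_(0 <= i < s * s) w3 i = (-1) ^+ s.+1 * s%:R.
Proof.
elim: s => [|s IH]; first by rewrite big_geq // mulr0.
rewrite (big_cat_nat _ (n := s * s)) //=; last lia.
rewrite IH w3_block !exprS natrD natrM -!natrM; ring.
Qed.

Lemma w3_sum_bound n : `|\sum_(i < n.+1) w3 i| <= 3 * (Nat.sqrt n)%:R + 1.
Proof.
set s := Nat.sqrt n; have hs := isq_spec n; rewrite -/s in hs.
rewrite -(big_mkord xpredT w3) (big_cat_nat _ (n := s * s)) //=; last lia.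
apply: (le_trans (ler_normD _ _)).
rewrite w3_sum_sq normrM normrX normrN1 expr1n mul1r ger0_norm //.
have h2 : `|\sum_(s * s <= i < n.+1) w3 i| <= ((n.+1 - s * s)%N)%:R.
  apply: (le_trans (ler_norm_sum _ _ _)).
  rewrite (eq_bigr (fun=> 1)); last by move=> i _; rewrite /w3 normrX normrN1 expr1n.
  by rewrite sumr_const_nat.
have h3 : ((n.+1 - s * s)%N)%:R <= ((2 * s + 1)%N)%:R :> R by rewrite ler_nat; lia.
rewrite natrD natrM in h3.
lra.
Qed.

Lemma w3_S0 : S0set w3.
Proof.
split; first exact: w3_linf.
apply/cvgrPdist_le => e e0.
have h := @cvg_harmonic R.
move/cvgrPdist_le : h => /(_ (e / 5)) [|N _ hN]; first by rewrite divr_gt0.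
exists (N * N)%N => // n /= hn.
set s := Nat.sqrt n; have hs := isq_spec n; rewrite -/s in hs.
have sN : (N <= s)%N.
  rewrite leqNgt; apply/negP => sN.
  have : (s.+1 * s.+1 <= N * N)%N by apply: leq_mul.
  lia.
have := hN s sN; rewrite /harmonic /= sub0r normrN => hk.
have S0 : (0 : R) <= s%:R by [].
have hk' : 5 <= e * (s%:R + 1).
  move: hk; rewrite ger0_norm ?invr_ge0 // -natr1 ler_pdivlMr; last lra.
  rewrite mulrC ler_pdivrMr //; lra.
have hn1 : s%:R * s%:R + 1 <= n.+1%:R :> R.
  by rewrite -natrM -natr1 lerD2r ler_nat; case/andP: hs.
rewrite sub0r normrN /cesaro normrM normfV (@ger0_norm _ n.+1%:R) // ler_pdivrMr; last by [].
apply: (le_trans (w3_sum_bound n)); rewrite -/s.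
set S := s%:R : R.
have a1 : e * (S * S + 1) <= e * n.+1%:R by rewrite ler_wpM2l //; lra.
apply: le_trans a1.
have s1 : 0 < S + 1 by rewrite /S; lra.
rewrite -(ler_pM2r s1).
have a3 : 5 * (S * S + 1) <= e * (S + 1) * (S * S + 1).
  by rewrite ler_wpM2r //; nra.
nra.
Qed.

Lemma wavg_const b y (c : R) : (forall k i, (i <= k)%N -> y (b k + i)%N = c) ->
  wavg b y = fun=> c.
Proof.
move=> h; apply/funext => k; rewrite /wavg.
rewrite (eq_bigr (fun=> c)); last by move=> i _; apply: h; rewrite -ltnS.
by rewrite sumr_const card_ord -[c *+ _]mulr_natr mulfK // pnatr_eq0.
Qed.

Lemma w3_far e : chat e -> forall c : R, c < 1 -> exists n, c < `|w3 n - e n|.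
Proof.
move=> [le [s hs]] c c1.
apply: contrapT => H.
have hle : forall n, `|w3 n - e n| <= c.
  by move=> n; rewrite leNgt; apply/negP => h; apply: H; exists n.
have [U [UU HU _]] := @ultra_ex setT (fun N => ex_intro _ N (conj (leqnn N) I)).
pose bp := fun k : nat => (k.*2 * k.*2)%N.
pose bm := fun k : nat => (k.*2.+1 * k.*2.+1)%N.
have BLp := @BL_ultra R U UU HU bp.
have BLm := @BL_ultra R U UU HU bm.
have lv : linf (fun n => 1 * w3 n + (-1) * e n) by apply: linf_lin => //; exact: w3_linf.
have bv : forall n, `|1 * w3 n + (-1) * e n| <= c.
  by move=> n; rewrite mul1r mulN1r.
have hp := BL_bound BLp lv bv.
have hm := BL_bound BLm lv bv.
rewrite (BL_lin BLp) ?(BL_lin BLm) // in hp hm; try exact: w3_linf; try exact: le.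
have E1 : wavg bp w3 = fun=> 1.
  apply: wavg_const => k i hi; rewrite /w3 (isq_unique (s := k.*2)).
    by rewrite -mul2n exprM sqrrN !expr1n.
  apply/andP; split; [exact: leq_addr|rewrite /bp; lia].
have E2 : wavg bm w3 = fun=> -1.
  apply: wavg_const => k i hi; rewrite /w3 (isq_unique (s := k.*2.+1)).
    by rewrite exprS -mul2n exprM sqrrN !expr1n mulr1.
  apply/andP; split; [exact: leq_addr|rewrite /bm; lia].
rewrite E1 E2 !lim_cst // in hp hm.
have s1 := hs _ BLp; have s2 := hs _ BLm; rewrite /= in s1 s2.
move: hp hm; rewrite !ler_norml s1 s2; lra.
Qed.

Lemma w3_far0 e : chat0 e -> forall c : R, c < 1 -> exists n, c < `|w3 n - e n|.
Proof. by move=> h; apply: w3_far; apply: chat0_chat. Qed.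

Lemma part_iii : strongly_lower_porous (@Sset R) (@chat R).
Proof.
apply: (porous_main (w := w3)).
- exact: Sset_linf.
- exact: Sset_lin.
- exact: chat_lin.
- exact: chat_Sset.
- exact: S0set_Sset w3_S0.
- exact: w3_bound.
- exact: w3_far.
Qed.

Lemma part_iv : strongly_lower_porous (@S0set R) (@chat0 R).
Proof.
apply: (porous_main (w := w3)).
- exact: S0set_linf.
- exact: S0set_lin.
- exact: chat0_lin.
- exact: chat0_S0set.
- exact: w3_S0.
- exact: w3_bound.
- exact: w3_far0.
Qed.

End P6.


Definition TT (k : nat) : nat := (2 ^ (2 ^ k))%N.

Lemma TT_sq k : TT k.+1 = (TT k * TT k)%N.
Proof. by rewrite /TT expnS mulnC expnM expnS expn1. Qed.

Lemma TT_gt k : (k < TT k)%N.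
Proof.
rewrite /TT; apply: (ltn_trans (ltn_expl k (ltnSn 1))).
by rewrite ltn_exp2l // ltn_expl.
Qed.

Lemma TT_pos k : (0 < TT k)%N.
Proof. by rewrite /TT expn_gt0. Qed.

Lemma g_eq k n : (TT k <= n < TT k.+1)%N -> trunc_log 2 (trunc_log 2 n) = k.
Proof.
move=> /andP [h1 h2].
have n0 : (0 < n)%N by apply: leq_trans (TT_pos k) h1.
apply: trunc_log_eq => //; apply/andP; split.
  exact: trunc_log_max.
have := trunc_logP (isT : (1 < 2)%N) n0 => h3.
have : (2 ^ trunc_log 2 n < 2 ^ 2 ^ k.+1)%N by apply: leq_ltn_trans h3 h2.
by rewrite ltn_exp2l.
Qed.

Section P7.
Variable R : realType.
Implicit Types (x y z u v w : nat -> R).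

Definition w5 : nat -> R := fun n => (-1) ^+ (trunc_log 2 (trunc_log 2 n)).

Lemma w5_bound n : `|w5 n| <= 1.
Proof. by rewrite /w5 normrX normrN1 expr1n. Qed.

Lemma w5_sum k : ((TT k.+1)%:R - 2 * (TT k)%:R : R) <= (-1) ^+ k * \sum_(i < TT k.+1) w5 i.
Proof.
rewrite -(big_mkord xpredT w5) (big_cat_nat _ (n := TT k)) //=; last first.
  by rewrite TT_sq leq_pmulr // TT_pos.
rewrite [\sum_(TT k <= i < TT k.+1) w5 i](eq_big_nat _ _ (F2 := fun=> (-1) ^+ k)); last first.
  by move=> i hi; rewrite /w5 (g_eq hi).
rewrite sumr_const_nat mulrDr.
have h4 : forall m, ((-1) ^+ k * ((-1) ^+ k *+ m) : R) = m%:R.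
  move=> m; rewrite -[(-1) ^+ k *+ _]mulr_natr mulrA -expr2 -exprM mulnC exprM.
  by rewrite sqrrN !expr1n mul1r.
rewrite h4.
have h1 : `|\sum_(0 <= i < TT k) w5 i| <= (TT k)%:R.
  apply: (le_trans (ler_norm_sum _ _ _)).
  rewrite (eq_bigr (fun=> 1)); last by move=> i _; rewrite /w5 normrX normrN1 expr1n.
  by rewrite sumr_const_nat subn0.
have h2 : - (TT k)%:R <= (-1) ^+ k * \sum_(0 <= i < TT k) w5 i.
  have : `|(-1) ^+ k * \sum_(0 <= i < TT k) w5 i| <= (TT k)%:R.
    by rewrite normrM normrX normrN1 expr1n mul1r.
  by rewrite ler_norml => /andP [].
have h3 : ((TT k.+1 - TT k)%N%:R : R) = (TT k.+1)%:R - (TT k)%:R.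
  by rewrite natrB // TT_sq leq_pmulr // TT_pos.
rewrite h3; lra.
Qed.

Lemma w5_ces k : 1 - 2 / (TT k)%:R <= (-1) ^+ k * cesaro w5 (TT k.+1).-1.
Proof.
rewrite /cesaro prednK ?TT_pos // mulrA.
have := w5_sum k; rewrite TT_sq natrM.
set a := (TT k)%:R : R.
have a0 : 0 < a by rewrite /a ltr0n TT_pos.
move=> h; rewrite ler_pdivlMr; last by rewrite mulr_gt0.
have -> : (1 - 2 / a) * (a * a) = a * a - 2 * a by field; rewrite gt_eqF.
exact: h.
Qed.

Lemma ces_bound v (c : R) : (forall n, `|v n| <= c) -> forall n, `|cesaro v n| <= c.
Proof.
move=> h n.
have -> : cesaro v n = wavg (fun=> 0%N) v n.
  by rewrite /wavg /cesaro /=; apply: congr2 => //; apply: eq_bigr => i _; rewrite add0n.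
exact: wavg_bound.
Qed.

Lemma w5_far e : Sset e -> forall c : R, c < 1 -> exists n, c < `|w5 n - e n|.
Proof.
move=> [le he] c c1; apply: contrapT => H.
have hle : forall n, `|w5 n - e n| <= c.
  by move=> n; rewrite leNgt; apply/negP => h; apply: H; exists n.
have hces : forall n, `|cesaro w5 n - cesaro e n| <= c.
  move=> n; have := @ces_bound (fun i => 1 * w5 i + (-1) * e i) c _ n.
  rewrite cesaro_lin mul1r mulN1r; apply.
  by move=> i; rewrite mul1r mulN1r.
set d := (1 - c) / 4.
have d0 : 0 < d by rewrite /d; lra.
set l := limn (cesaro e).
have : cesaro e @ \oo --> l by [].
move/cvgrPdist_le => /(_ d d0) [N _ hN].
have := @cvg_harmonic R; move/cvgrPdist_le => /(_ (d / 2)) [|K0 _ hK].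
  by rewrite divr_gt0.
have hT : forall j, (K0 <= (TT j).-1)%N -> 2 / (TT j)%:R <= d.
  move=> j hj; have := hK _ hj.
  rewrite /harmonic /= prednK ?TT_pos // sub0r normrN ger0_norm ?invr_ge0 //.
  lra.
set k := (K0 + N).*2.
have g1 := TT_gt k; have g2 := TT_gt k.+1; have g3 := TT_gt k.+2.
have h1 := w5_ces k.
have h2 := w5_ces k.+1.
have t1 := hT k ltac:(lia).
have t2 := hT k.+1 ltac:(lia).
have ek : (-1) ^+ k = 1 :> R by rewrite /k -mul2n exprM sqrrN !expr1n.
rewrite ek mul1r in h1.
rewrite exprS ek mulr1 mulN1r in h2.
have c1' := hces (TT k.+1).-1.
have c2' := hces (TT k.+2).-1.
have n1 := hN (TT k.+1).-1 ltac:(rewrite /=; lia).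
have n2 := hN (TT k.+2).-1 ltac:(rewrite /=; lia).
move: c1' c2' n1 n2; rewrite !ler_norml => /andP [a1 a2] /andP [a3 a4] /andP [a5 a6] /andP [a7 a8].
rewrite /d in t1 t2 a5 a6 a7 a8.
lra.
Qed.

Lemma w5_linf : linf w5.
Proof. by exists 1; apply: w5_bound. Qed.

Lemma part_v : strongly_lower_porous (@linf R) (@Sset R).
Proof.
apply: (porous_main (w := w5)).
- by [].
- exact: linf_lin.
- exact: Sset_lin.
- exact: Sset_linf.
- exact: w5_linf.
- exact: w5_bound.
- exact: w5_far.
Qed.

End P7.

Theorem theorem2p6 (R : realType) :
  [/\ strongly_lower_porous (@chat R) (@cseq R),
      strongly_lower_porous (@chat0 R) (@c0seq R),
      strongly_lower_porous (@Sset R) (@chat R),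
      strongly_lower_porous (@S0set R) (@chat0 R) &
      strongly_lower_porous (@linf R) (@Sset R)].
Proof.
split.
- exact: part_i.
- exact: part_ii.
- exact: part_iii.
- exact: part_iv.
- exact: part_v.
Qed.
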